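(* Let $W$ be a non-negative symmetric $n\times n$ matrix with zero diagonal. Then \begin{enumerate} \item $\mathcal D(W)$ consists of exactly one matrix $D^*$; \item $\mathcal P(W)=\{P\in\mathcal P: P(W-D^* )=0\}$. \end{enumerate}
   Context: $\mathcal P=\{P\in M_n(\mathbb R): P\succeq0,\ P_{ii}=1\ \forall i\}$. For matrices, $P\circ W=\sum_{i,j}P_{ij}W_{ij}$. $\mathcal P(W)$ is the set of optimal solutions of the SDP: minimize $P\circ W$ subject to $P\in\mathcal P$. $\mathcal D(W)$ is the set of optimal solutions of its dual: maximize $\sum_iD_{ii}$ subject to $D$ diagonal and $W-D\succeq0$. Here $A\succeq0$ means $A$ is positive semidefinite. *)

(* Defs.v *)
From mathcomp Require Import all_boot all_order all_algebra.
From mathcomp Require Import reals.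
Set Implicit Arguments. Unset Strict Implicit. Unset Printing Implicit Defensive.
Import Order.TTheory GRing.Theory Num.Theory.
Local Open Scope ring_scope.

Section Defs.
Variables (R : realType) (n : nat).

Definition psd (A : 'M[R]_n) : Prop :=
  A^T = A /\ forall x : 'cV[R]_n, 0 <= (x^T *m A *m x) 0 0.

Definition frob (P W : 'M[R]_n) : R := \sum_(i < n) \sum_(j < n) P i j * W i j.

Definition elliptope (P : 'M[R]_n) : Prop :=
  psd P /\ forall i, P i i = 1.

(* calP(W): optimal solutions of  min P o W  s.t. P in calP *)
Definition primal_opt (W P : 'M[R]_n) : Prop :=
  elliptope P /\ forall Q, elliptope Q -> frob P W <= frob Q W.

Definition dual_feasible (W D : 'M[R]_n) : Prop :=
  is_diag_mx D /\ psd (W - D).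

(* calD(W): optimal solutions of  max sum_i D_ii  s.t. D diagonal, W - D psd *)
Definition dual_opt (W D : 'M[R]_n) : Prop :=
  dual_feasible W D /\
  forall D', dual_feasible W D' -> \sum_(i < n) D' i i <= \sum_(i < n) D i i.

End Defs.

(* Main.v *)
Require Import Defs.
From HB Require Import structures.
From mathcomp Require Import all_boot all_order all_algebra.
From mathcomp Require Import reals.
From mathcomp Require Import all_classical all_reals all_analysis.
From mathcomp Require Import ring lra.
Set Implicit Arguments. Unset Strict Implicit. Unset Printing Implicit Defensive.
Import Order.TTheory GRing.Theory Num.Theory.
Import numFieldNormedType.Exports.
Local Open Scope ring_scope.

Definition bf (R : realType) n (A : 'M[R]_n) (x y : 'I_n -> R) : R :=
  \sum_i \sum_j x i * A i j * y j.

Lemma quadE (R : realType) n (A : 'M[R]_n) (x : 'cV[R]_n) :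
  (x^T *m A *m x) 0 0 = bf A (fun i => x i 0) (fun i => x i 0).
Proof.
rewrite mxE /bf; under eq_bigr do rewrite mxE big_distrl.
rewrite exchange_big; apply: eq_bigr => i _; apply: eq_bigr => j _.
by rewrite !mxE.
Qed.

Lemma bf_ext (R : realType) n (A : 'M[R]_n) x x' y y' :
  (forall i, x i = x' i) -> (forall i, y i = y' i) -> bf A x y = bf A x' y'.
Proof.
by move=> hx hy; apply: eq_bigr => i _; apply: eq_bigr => j _; rewrite hx hy.
Qed.

Lemma psdE (R : realType) n (A : 'M[R]_n) :
  psd A <-> A^T = A /\ forall x, 0 <= bf A x x.
Proof.
split=> -[sA pA]; split=> // x.
  by have := pA (\col_i x i); rewrite quadE (@bf_ext _ _ _ _ x _ x) // => i; rewrite mxE.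
by rewrite quadE.
Qed.

Lemma symE (R : realType) n (A : 'M[R]_n) : A^T = A -> forall i j, A i j = A j i.
Proof. by move=> sA i j; rewrite -{1}sA mxE. Qed.

Lemma bfDl (R : realType) n (A : 'M[R]_n) x y z :
  bf A (fun i => x i + y i) z = bf A x z + bf A y z.
Proof.
rewrite /bf -big_split; apply: eq_bigr => i _; rewrite -big_split.
by apply: eq_bigr => j _; rewrite !mulrDl.
Qed.

Lemma bfDr (R : realType) n (A : 'M[R]_n) x y z :
  bf A z (fun i => x i + y i) = bf A z x + bf A z y.
Proof.
rewrite /bf -big_split; apply: eq_bigr => i _; rewrite -big_split.
by apply: eq_bigr => j _; rewrite !mulrDr.
Qed.

Lemma bfZl (R : realType) n (A : 'M[R]_n) (t : R) x z :
  bf A (fun i => t * x i) z = t * bf A x z.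
Proof.
rewrite /bf mulr_sumr; apply: eq_bigr => i _; rewrite mulr_sumr.
by apply: eq_bigr => j _; rewrite !mulrA.
Qed.

Lemma bfZr (R : realType) n (A : 'M[R]_n) (t : R) x z :
  bf A z (fun i => t * x i) = t * bf A z x.
Proof.
rewrite /bf mulr_sumr; apply: eq_bigr => i _; rewrite mulr_sumr.
by apply: eq_bigr => j _; rewrite mulrCA mulrA.
Qed.

Lemma bfC (R : realType) n (A : 'M[R]_n) x y : A^T = A -> bf A x y = bf A y x.
Proof.
move=> sA; rewrite /bf [LHS]exchange_big /=; apply: eq_bigr => i _; apply: eq_bigr => j _.
by rewrite (symE sA j i) mulrC mulrA mulrAC.
Qed.

Lemma bf_expand (R : realType) n (A : 'M[R]_n) x y (t : R) : A^T = A ->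
  bf A (fun i => x i + t * y i) (fun i => x i + t * y i) =
  bf A x x + 2 * t * bf A x y + t ^+ 2 * bf A y y.
Proof.
move=> sA; rewrite bfDl !bfDr !bfZl !bfZr (bfC y x sA).
ring.
Qed.

Lemma quad_zero_lemma (R : realType) (b c : R) : 0 <= c ->
  (forall t, 0 <= 2 * t * b + t ^+ 2 * c) -> b = 0.
Proof.
move=> c0 H; have := H (- b / (c + 1)).
have c1 : 0 < c + 1 by lra.
set u := - b / (c + 1).
have hu : u * (c + 1) = - b by rewrite /u mulfVK // gt_eqF.
move=> h; nra.
Qed.

Lemma psd_null (R : realType) n (A : 'M[R]_n) x : psd A -> bf A x x = 0 ->
  forall y, bf A x y = 0.
Proof.
move=> /psdE [sA pA] hx y; apply: (@quad_zero_lemma _ _ (bf A y y)) => // t.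
by have := pA (fun i => x i + t * y i); rewrite bf_expand // hx add0r.
Qed.

Lemma psd_CS (R : realType) n (A : 'M[R]_n) x y : psd A ->
  bf A x y ^+ 2 <= bf A x x * bf A y y.
Proof.
move=> hA; have [sA pA] := (psdE A).1 hA.
have hx := pA x; have hy := pA y.
have [h0|hx0] := eqVneq (bf A x x) 0.
  by rewrite (psd_null hA h0) h0 expr0n mul0r.
have hxp : 0 < bf A x x by rewrite lt_def hx0 hx.
have := pA (fun i => y i + (- bf A x y / bf A x x) * x i).
rewrite bf_expand // (bfC y x sA).
set a := bf A x x; set b := bf A x y; set c := bf A y y.
have hu : (- b / a) * a = - b by rewrite mulfVK.
set u := - b / a. move=> h.
have h2 := mulr_ge0 (ltW hxp) h.
have e : a * (c + 2 * u * b + u ^+ 2 * a) = a * c + 2 * b * (u * a) + (u * a) ^+ 2 by ring.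
rewrite e hu in h2; lra.
Qed.

Definition dlt (R : realType) n (i : 'I_n) : 'I_n -> R := fun k => (k == i)%:R.

Lemma sum_dl (R : realType) n (f : 'I_n -> R) i : \sum_k dlt R i k * f k = f i.
Proof.
rewrite (bigD1 i) //= /dlt eqxx mul1r big1 ?addr0 // => k /negbTE ->.
by rewrite mul0r.
Qed.

Lemma sum_dr (R : realType) n (f : 'I_n -> R) i : \sum_k f k * dlt R i k = f i.
Proof. by under eq_bigr do rewrite mulrC; rewrite sum_dl. Qed.

Lemma bf_dl (R : realType) n (A : 'M[R]_n) i y : bf A (dlt R i) y = \sum_j A i j * y j.
Proof.
rewrite /bf; under eq_bigr do under eq_bigr do rewrite -mulrA.
rewrite -(sum_dl (fun k => \sum_j A k j * y j) i); apply: eq_bigr => k _.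
by rewrite mulr_sumr.
Qed.

Lemma bf_dd (R : realType) n (A : 'M[R]_n) i j : bf A (dlt R i) (dlt R j) = A i j.
Proof. by rewrite bf_dl sum_dr. Qed.

Lemma psd_diag (R : realType) n (A : 'M[R]_n) i : psd A -> 0 <= A i i.
Proof. by move=> /psdE [_ pA]; rewrite -bf_dd. Qed.

Lemma psd_offdiag (R : realType) n (A : 'M[R]_n) i j : psd A ->
  A i j ^+ 2 <= A i i * A j j.
Proof. by move=> hA; rewrite -!bf_dd; apply: psd_CS. Qed.

Lemma psd_diag0 (R : realType) n (A : 'M[R]_n) i j : psd A -> A i i = 0 -> A i j = 0.
Proof.
move=> hA h; have := psd_offdiag i j hA; rewrite h mul0r => h2.
have : A i j ^+ 2 = 0 by apply/eqP; rewrite eq_le h2 sqr_ge0.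
by move/eqP; rewrite expf_eq0 /= => /eqP.
Qed.

Definition rk1 (R : realType) n (Q : 'M[R]_n) (q : 'I_n -> R) (a : R) : 'M[R]_n :=
  \matrix_(i, j) (Q i j - q i * q j / a).

Lemma bf_rk1 (R : realType) n (Q : 'M[R]_n) q a x y :
  bf (rk1 Q q a) x y = bf Q x y - (\sum_i x i * q i) * (\sum_j q j * y j) / a.
Proof.
rewrite /bf mulr_suml mulr_suml -sumrB; apply: eq_bigr => i _.
rewrite mulr_sumr mulr_suml -sumrB; apply: eq_bigr => j _.
rewrite mxE; ring.
Qed.

Lemma frob_rk1 (R : realType) n (Q S : 'M[R]_n) q a :
  frob (rk1 Q q a) S = frob Q S - bf S q q / a.
Proof.
rewrite /frob /bf mulr_suml -sumrB; apply: eq_bigr => i _.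
rewrite mulr_suml -sumrB; apply: eq_bigr => j _.
rewrite mxE; ring.
Qed.

Lemma psd_rk1 (R : realType) n (Q : 'M[R]_n) i0 : psd Q -> 0 < Q i0 i0 ->
  psd (rk1 Q (fun j => Q i0 j) (Q i0 i0)).
Proof.
move=> hQ ha; have [sQ pQ] := (psdE Q).1 hQ; apply/psdE; split.
  apply/matrixP => i j; rewrite !mxE (symE sQ i j); ring.
move=> x; rewrite bf_rk1.
have hcs := psd_CS (dlt R i0) x hQ.
rewrite bf_dd bf_dl in hcs.
have -> : \sum_i x i * Q i0 i = \sum_j Q i0 j * x j by apply: eq_bigr => j _; rewrite mulrC.
set b := \sum_j Q i0 j * x j in hcs *.
set a := Q i0 i0 in ha hcs *. set c := bf Q x x in hcs *.
have hu : b * b / a * a = b * b by rewrite mulfVK // gt_eqF.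
have : 0 <= b * b / a by apply: divr_ge0; [nra | lra].
set u := b * b / a in hu *; move=> u0. nra.
Qed.

Lemma frob_psd_gen (R : realType) n (k : nat) (Q S : 'M[R]_n) :
  (#|[set i | Q i i != 0%R]| <= k)%N -> psd Q -> psd S ->
  0 <= frob Q S /\ (frob Q S = 0 -> Q *m S = 0).
Proof.
elim: k Q => [|k IH] Q hk hQ hS.
  have Q0 : Q = 0.
    apply/matrixP => i j; rewrite mxE; apply: (psd_diag0 _ hQ).
    apply/eqP; apply: contraT => hi.
    have : i \in [set i | Q i i != 0%R] by rewrite inE.
    by move: hk; rewrite leqn0 => /eqP/cards0_eq ->; rewrite inE.
  subst Q; rewrite /frob big1 ?mul0mx //=.
  by move=> i _; rewrite big1 // => j _; rewrite mxE mul0r.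
have [e|] := posnP #|[set i | Q i i != 0%R]|.
  by apply: IH => //; rewrite e.
case/card_gt0P => i0; rewrite inE => hi0.
have ha : 0 < Q i0 i0 by rewrite lt_def hi0 psd_diag.
set q := fun j => Q i0 j; set a := Q i0 i0 in ha.
have hQ' := psd_rk1 hQ ha.
have [sQ pQ] := (psdE Q).1 hQ; have [sS pS] := (psdE S).1 hS.
have hk' : (#|[set i | rk1 Q q a i i != 0%R]| <= k)%N.
  have sub : [set i | rk1 Q q a i i != 0] \subset [set i | Q i i != 0] :\ i0.
    apply/fintype.subsetP => j; rewrite !inE mxE => hj; apply/andP; split.
      apply: contraNneq hj => ->; rewrite /q /a; apply/eqP.
      rewrite -/a mulfK ?subrr // gt_eqF //.
    apply: contraNneq hj => hjj; apply/eqP.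
    by rewrite /q (symE sQ i0 j) (psd_diag0 i0 hQ hjj) hjj mul0r mul0r subr0.
  have := subset_leq_card sub; rewrite (cardsD1 i0 [set i | Q i i != 0]) inE hi0 /= in hk.
  by move=> h; apply: leq_trans h _; rewrite -ltnS.
have [h1 h2] := IH _ hk' hQ' hS.
have hqq := pS q.
have hfr := frob_rk1 Q S q a.
have hd : 0 <= bf S q q / a by apply: divr_ge0 => //; lra.
split; first lra.
move=> h0.
have f1 : frob (rk1 Q q a) S = 0 by lra.
have f2 : bf S q q / a = 0 by lra.
have f3 : bf S q q = 0.
  by move: f2 => /eqP; rewrite mulf_eq0 invr_eq0 (gt_eqF ha) orbF => /eqP.
have hnull := psd_null hS f3.
have M0 := h2 f1.
apply/matrixP => i j; rewrite !mxE.
have : (rk1 Q q a *m S) i j = 0 by rewrite M0 mxE.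
rewrite mxE => e.
have := hnull (dlt R j); rewrite /bf.
under eq_bigr do rewrite sum_dr.
move=> e2.
rewrite -[LHS]subr0 -{2}e.
rewrite -sumrB (_ : \sum_i1 _ = q i / a * \sum_i1 q i1 * S i1 j).
  by rewrite e2 mulr0.
rewrite mulr_sumr; apply: eq_bigr => l _; rewrite mxE /q (symE sQ i l); ring.
Qed.

Lemma frob_psd (R : realType) n (Q S : 'M[R]_n) : psd Q -> psd S ->
  0 <= frob Q S /\ (frob Q S = 0 -> Q *m S = 0).
Proof. by apply: frob_psd_gen (leqnn _). Qed.

Definition cc (R : realType) n (y : 'I_n -> R) i := (1 - y i ^+ 2) / (1 + y i ^+ 2).
Definition ss (R : realType) n (y : 'I_n -> R) i := 2 * y i / (1 + y i ^+ 2).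
Definition Pt (R : realType) n (P : 'M[R]_n) (y : 'I_n -> R) : 'M[R]_n :=
  \matrix_(i, j) (cc y i * cc y j * P i j + ss y i * ss y j).

Lemma e_pos (R : realType) (v : R) : 0 < 1 + v ^+ 2.
Proof. have := sqr_ge0 v; lra. Qed.

Lemma bf_Pt (R : realType) n (P : 'M[R]_n) y z :
  bf (Pt P y) z z = bf P (fun i => cc y i * z i) (fun i => cc y i * z i)
     + (\sum_i ss y i * z i) * (\sum_j ss y j * z j).
Proof.
rewrite /bf mulr_suml -big_split; apply: eq_bigr => i _.
rewrite mulr_sumr -big_split; apply: eq_bigr => j _.
rewrite mxE /=; ring.
Qed.

Lemma Pt_ell (R : realType) n (P : 'M[R]_n) y : elliptope P -> elliptope (Pt P y).
Proof.
move=> [hP dP]; have [sP pP] := (psdE P).1 hP; split.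
  apply/psdE; split.
    by apply/matrixP => i j; rewrite !mxE (symE sP i j); ring.
  move=> z; rewrite bf_Pt; apply: addr_ge0 => //.
  by rewrite -expr2 sqr_ge0.
move=> i; rewrite mxE dP /cc /ss.
have := e_pos (y i); set e := 1 + y i ^+ 2 => he.
have hne : e != 0 by rewrite gt_eqF.
apply: (@mulIf _ (e * e)); first by rewrite mulf_neq0.
rewrite mul1r mulrDl.
have -> : (1 - y i ^+ 2) / e * ((1 - y i ^+ 2) / e) * 1 * (e * e) = (1 - y i ^+ 2) ^+ 2.
  by field.
have -> : 2 * y i / e * (2 * y i / e) * (e * e) = 4 * y i ^+ 2 by field.
rewrite /e; ring.
Qed.

Lemma Pt_term (R : realType) (p w y1 y2 : R) :
  (((1 - y1 ^+ 2) / (1 + y1 ^+ 2)) * ((1 - y2 ^+ 2) / (1 + y2 ^+ 2)) * p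
     + (2 * y1 / (1 + y1 ^+ 2)) * (2 * y2 / (1 + y2 ^+ 2))) * w - p * w
  = 2 * (w * (2 * y1 * y2 - (y1 ^+ 2 + y2 ^+ 2) * p)) / ((1 + y1 ^+ 2) * (1 + y2 ^+ 2)).
Proof.
have h1 := e_pos y1; have h2 := e_pos y2.
by field; rewrite ?gt_eqF //.
Qed.

Lemma per_bound (R : realType) (m a b s : R) : 0 <= a -> 0 <= b -> 0 <= s -> s <= 1 ->
  m / ((1 + s * a) * (1 + s * b)) <= m + s * (`|m| * (a + b + a * b)).
Proof.
move=> a0 b0 s0 s1.
set E := (1 + s * a) * (1 + s * b).
have hsa := mulr_ge0 s0 a0; have hsb := mulr_ge0 s0 b0.
have hab := mulr_ge0 hsa hsb.
have s1' : 0 <= 1 - s by lra.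
have hab2 := mulr_ge0 (mulr_ge0 s0 (mulr_ge0 a0 b0)) s1'.
have E1 : 1 <= E.
  rewrite /E; have -> : (1 + s * a) * (1 + s * b) = 1 + s * a + s * b + (s * a) * (s * b) by ring.
  lra.
have E0 : 0 < E by lra.
have hd : m / E - m = - (m * (E - 1)) / E by field; rewrite gt_eqF.
have h1 : - (m * (E - 1)) / E <= `|m| * (E - 1).
  rewrite ler_pdivrMr //.
  have hm := ler_norm (- m); rewrite normrN in hm.
  have : - (m * (E - 1)) <= `|m| * (E - 1) by rewrite -mulNr ler_wpM2r //; lra.
  have : 0 <= `|m| * (E - 1) by apply: mulr_ge0 => //; lra.
  nra.
have h2 : `|m| * (E - 1) <= s * (`|m| * (a + b + a * b)).
  have hm := normr_ge0 m.
  have : E - 1 <= s * (a + b + a * b).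
    rewrite /E; have -> : (1 + s * a) * (1 + s * b) = 1 + s * a + s * b + (s * a) * (s * b) by ring.
    have -> : s * a * (s * b) = s * (a * b) - s * (a * b) * (1 - s) by ring.
    lra.
  move=> h; have := ler_wpM2l hm h; lra.
lra.
Qed.

Lemma limit_arg (R : realType) (M C : R) : 0 <= C ->
  (forall e, 0 < e -> e <= 1 -> - (e ^+ 2 * C) <= M) -> 0 <= M.
Proof.
move=> C0 H; rewrite leNgt; apply/negP => hM.
set e := Num.min 1 (- M / (C + 1)).
have he0 : 0 < e by rewrite lt_min ltr01 divr_gt0 //; lra.
have he1 : e <= 1 by rewrite ge_min lexx.
have he2 : e <= - M / (C + 1) by rewrite ge_min lexx orbT.
have := H e he0 he1.
have : e * (C + 1) <= - M by rewrite -ler_pdivlMr //; lra.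
nra.
Qed.

Definition Dz (R : realType) n (P W : 'M[R]_n) : 'M[R]_n :=
  diag_mx (\row_i \sum_j P i j * W i j).

Lemma bf_diag (R : realType) n (d : 'rV[R]_n) x :
  bf (diag_mx d) x x = \sum_i x i ^+ 2 * d 0 i.
Proof.
apply: eq_bigr => i _; rewrite (bigD1 i) //= big1 ?addr0.
  by rewrite mxE eqxx mulr1n; ring.
by move=> j /negbTE hj; rewrite mxE eq_sym hj mulr0n mulr0 mul0r.
Qed.

Lemma bfB (R : realType) n (A B : 'M[R]_n) x y : bf (A - B) x y = bf A x y - bf B x y.
Proof.
rewrite /bf -sumrB; apply: eq_bigr => i _; rewrite -sumrB; apply: eq_bigr => j _.
by rewrite !mxE; ring.
Qed.

Lemma factA (R : realType) n (W P : 'M[R]_n) x : W^T = W -> P^T = P ->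
  bf (W - Dz P W) x x * 2 =
  \sum_i \sum_j W i j * (2 * x i * x j - (x i ^+ 2 + x j ^+ 2) * P i j).
Proof.
move=> sW sP; rewrite bfB bf_diag.
have h1 : \sum_i \sum_j W i j * x j ^+ 2 * P i j = \sum_i \sum_j W i j * x i ^+ 2 * P i j.
  rewrite exchange_big; apply: eq_bigr => i _; apply: eq_bigr => j _.
  by rewrite (symE sW i j) (symE sP i j).
have h2 : \sum_i x i ^+ 2 * (\row_i \sum_j P i j * W i j) 0 i =
          \sum_i \sum_j W i j * x i ^+ 2 * P i j.
  apply: eq_bigr => i _; rewrite mxE mulr_sumr; apply: eq_bigr => j _; ring.
have h3 : \sum_i \sum_j W i j * (2 * x i * x j - (x i ^+ 2 + x j ^+ 2) * P i j) =
   2 * bf W x x - \sum_i \sum_j W i j * x i ^+ 2 * P i j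
   - \sum_i \sum_j W i j * x j ^+ 2 * P i j.
  rewrite /bf mulr_sumr -!sumrB; apply: eq_bigr => i _.
  rewrite mulr_sumr -!sumrB; apply: eq_bigr => j _; ring.
rewrite h3 h1 h2; ring.
Qed.

Lemma dual_cert (R : realType) n (W P : 'M[R]_n) : W^T = W -> elliptope P ->
  (forall Q, elliptope Q -> frob P W <= frob Q W) -> psd (W - Dz P W).
Proof.
move=> sW hP opt; have [sP _] := (psdE P).1 hP.1.
apply/psdE; split.
  apply/matrixP => i j; rewrite !mxE (symE sW j i) eq_sym.
  by case: eqP => [->|]; rewrite ?mulr0n.
move=> x.
set m := fun i j => W i j * (2 * x i * x j - (x i ^+ 2 + x j ^+ 2) * P i j).
set C := \sum_i \sum_j `|m i j| * (x i ^+ 2 + x j ^+ 2 + x i ^+ 2 * x j ^+ 2).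
suff : 0 <= \sum_i \sum_j m i j.
  by rewrite -factA // => h; rewrite -(@pmulr_lge0 _ 2) //.
apply: (@limit_arg _ _ C).
  apply: sumr_ge0 => i _; apply: sumr_ge0 => j _; apply: mulr_ge0 => //.
  by apply: addr_ge0; [apply: addr_ge0|apply: mulr_ge0]; rewrite sqr_ge0.
move=> e e0 e1.
set s := e ^+ 2.
have s0 : 0 <= s by rewrite sqr_ge0.
have s1 : s <= 1 by rewrite /s expr2; have := mulr_ge0 (ltW e0) (ltW e0); nra.
set den := fun i j => (1 + s * x i ^+ 2) * (1 + s * x j ^+ 2).
have hB : 0 <= \sum_i \sum_j m i j / den i j.
  have := opt _ (Pt_ell (fun i => e * x i) hP).
  rewrite -subr_ge0 /frob -sumrB.
  have -> : \sum_i (\sum_j Pt P (fun i => e * x i) i j * W i j - \sum_j P i j * W i j)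
     = (2 * s) * \sum_i \sum_j m i j / den i j.
    rewrite mulr_sumr; apply: eq_bigr => i _; rewrite -sumrB mulr_sumr.
    apply: eq_bigr => j _; rewrite mxE /cc /ss Pt_term /m /den /s !exprMn; field.
    by rewrite (gt_eqF (e_pos _)) (gt_eqF (e_pos _)).
  have hs : 0 < 2 * s by rewrite mulr_gt0 // exprn_gt0.
  by rewrite (pmulr_rge0 _ hs).
have hC : \sum_i \sum_j m i j / den i j <= \sum_i \sum_j m i j + s * C.
  rewrite /C mulr_sumr -big_split /=; apply: ler_sum => i _.
  rewrite mulr_sumr -big_split /=; apply: ler_sum => j _.
  by apply: per_bound; rewrite ?sqr_ge0.
lra.
Qed.

Lemma frob_diag (R : realType) n (Q D : 'M[R]_n) : is_diag_mx D -> (forall i, Q i i = 1) ->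
  frob Q D = \sum_i D i i.
Proof.
move=> /is_diag_mxP hD hQ; apply: eq_bigr => i _.
rewrite (bigD1 i) //= big1 ?addr0 ?hQ ?mul1r // => j hj.
by rewrite hD ?mulr0 // eq_sym.
Qed.

Lemma frobB (R : realType) n (Q A B : 'M[R]_n) : frob Q (A - B) = frob Q A - frob Q B.
Proof.
rewrite /frob -sumrB; apply: eq_bigr => i _; rewrite -sumrB; apply: eq_bigr => j _.
by rewrite !mxE; ring.
Qed.

Lemma weak (R : realType) n (W Q D : 'M[R]_n) : elliptope Q -> dual_feasible W D ->
  \sum_i D i i <= frob Q W.
Proof.
move=> [hQ dQ] [dD hS]; have [h _] := frob_psd hQ hS.
by rewrite frobB (frob_diag dD dQ) subr_ge0 in h.
Qed.

Lemma Dz_diag (R : realType) n (P W : 'M[R]_n) : is_diag_mx (Dz P W).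
Proof. by apply/is_diag_mxP => i j hij; rewrite /Dz mxE; case: eqP => // e; move: hij; rewrite e eqxx. Qed.

Lemma Dz_tr (R : realType) n (P W : 'M[R]_n) : \sum_i Dz P W i i = frob P W.
Proof. by rewrite /frob; apply: eq_bigr => i _; rewrite /Dz !mxE eqxx mulr1n. Qed.

Lemma frob_mul (R : realType) n (P S : 'M[R]_n) : S^T = S -> P *m S = 0 -> frob P S = 0.
Proof.
move=> sS h; rewrite /frob big1 // => i _.
have e := congr1 (fun M : 'M[R]_n => M i i) h; rewrite /= !mxE in e; apply: etrans e.
by apply: eq_bigr => j _; rewrite (symE sS).
Qed.

Lemma main_assembly (R : realType) (n : nat) (W : 'M[R]_n) :
  W^T = W ->
  (exists P, elliptope P /\ forall Q, elliptope Q -> frob P W <= frob Q W) ->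
  exists Dstar : 'M[R]_n,
    (forall D, dual_opt W D <-> D = Dstar) /\
    (forall P, primal_opt W P <-> (elliptope P /\ P *m (W - Dstar) = 0)).
Proof.
move=> sW [P0 [hP0 opt0]].
have feas0 : dual_feasible W (Dz P0 W) by split; [apply: Dz_diag | apply: dual_cert].
have [sP0 _] := (psdE P0).1 hP0.1.
exists (Dz P0 W); split.
  move=> D; split; last first.
    move=> ->; split => // D' hD'; rewrite Dz_tr; exact: weak hP0 hD'.
  move=> [hD optD].
  have h1 := optD _ feas0; rewrite Dz_tr in h1.
  have h2 := weak hP0 hD.
  have e0 : frob P0 (W - D) = 0 by rewrite frobB (frob_diag hD.1 hP0.2); lra.
  have [_ h3] := frob_psd hP0.1 hD.2.
  have M0 := h3 e0.
  have /is_diag_mxP dD := hD.1.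
  apply/matrixP => i j; rewrite !mxE.
  have [<-|hij] := eqVneq i j; last by rewrite dD // (negbTE hij) mulr0n.
  rewrite mulr1n.
  have e := congr1 (fun M : 'M[R]_n => M i i) M0; rewrite /= !mxE in e.
  have e1 : \sum_j P0 i j * (W - D) j i = \sum_j P0 i j * W i j - \sum_j P0 i j * D j i.
    by rewrite -sumrB; apply: eq_bigr => k _; rewrite !mxE (symE sW k i); ring.
  have e2 : \sum_j P0 i j * D j i = D i i.
    rewrite (bigD1 i) //= hP0.2 mul1r big1 ?addr0 // => k hk.
    by rewrite dD ?mulr0.
  by rewrite e1 e2 in e; lra.
move=> P; split.
  move=> [hP optP]; split => //.
  have h1 := optP _ hP0.
  have h2 := weak hP feas0; rewrite Dz_tr in h2.
  have e0 : frob P (W - Dz P0 W) = 0 by rewrite frobB (frob_diag (Dz_diag _ _) hP.2) Dz_tr; lra.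
  have [_ h3] := frob_psd hP.1 feas0.2.
  exact: h3.
move=> [hP M0]; split => // Q hQ.
have := frob_mul ((psdE _).1 feas0.2).1 M0.
rewrite frobB (frob_diag (Dz_diag _ _) hP.2) Dz_tr => e.
have := weak hQ feas0; rewrite Dz_tr; lra.
Qed.

Local Open Scope classical_set_scope.
Local Open Scope ring_scope.


Lemma cont_sum (R : realType) N (I : Type) (r : seq I) (F : I -> 'rV[R]_N -> R) :
  (forall i, continuous (F i)) -> continuous (fun v => \sum_(i <- r) F i v).
Proof.
move=> hF; elim: r => [|a r IH].
  by under [fun v => _]boolp.funext do rewrite big_nil; exact: cst_continuous.
under [fun v => _]boolp.funext do rewrite big_cons.
by move=> x; apply: continuousD; [exact: hF | exact: IH].
Qed.

Lemma cont_coord (R : realType) N (k : 'I_N) : continuous (fun v : 'rV[R]_N => v ord0 k).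
Proof. exact: coord_continuous. Qed.

Lemma cont_cmul (R : realType) N (c : R) (g : 'rV[R]_N -> R) :
  continuous g -> continuous (fun v => c * g v).
Proof.
move=> hg x; exact: cvgMl_tmp (hg x).
Qed.

Lemma cont_vm (R : realType) n (i j : 'I_n) :
  continuous (fun v : 'rV[R]_(n * n) => vec_mx v i j).
Proof.
under [fun v => _]boolp.funext do rewrite mxE.
exact: cont_coord.
Qed.

Lemma cont_bf (R : realType) n (c : 'I_n -> 'I_n -> R) :
  continuous (fun v : 'rV[R]_(n * n) => \sum_i \sum_j c i j * vec_mx v i j).
Proof.
apply: cont_sum => i; apply: cont_sum => j; apply: cont_cmul; exact: cont_vm.
Qed.

Lemma closed_fam (R : realType) N (K : Type) (P : set R) (g : K -> 'rV[R]_N -> R) :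
  closed P -> (forall k, continuous (g k)) -> closed [set v | forall k, P (g k v)].
Proof.
move=> cP cg.
have -> : [set v | forall k, P (g k v)] = \bigcap_(k in [set: K]) (g k @^-1` P).
  apply/seteqP; split => v /= h k; first by move=> _; exact: h.
  exact: h.
apply: closed_bigI => k _; apply: preimage_closed => //.
Qed.

Lemma ell_bound (R : realType) n (P : 'M[R]_n) i j : elliptope P -> -1 <= P i j <= 1.
Proof.
move=> [hP dP]; have := psd_offdiag i j hP; rewrite !dP mulr1 => h.
apply/andP; split; nra.
Qed.

Lemma E_closed (R : realType) n :
  closed [set v : 'rV[R]_(n * n) | elliptope (vec_mx v)].
Proof.
have -> : [set v : 'rV[R]_(n * n) | elliptope (vec_mx v)] =
  [set v | forall x : 'I_n -> R, [set t : R | 0 <= t]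
             (\sum_i \sum_j (x i * x j) * vec_mx v i j)] `&`
  [set v | forall p : 'I_n * 'I_n, [set t : R | t = 0] (vec_mx v p.1 p.2 - vec_mx v p.2 p.1)] `&`
  [set v | forall i, [set t : R | t = 1] (vec_mx v i i)].
  apply/seteqP; split => v /=.
    move=> [hP dP]; have [sP pP] := (psdE _).1 hP; split; [split|] => //.
    - move=> x; have := pP x; rewrite /bf.
      by under eq_bigr do under eq_bigr do rewrite mulrAC.
    - by move=> [i j] /=; rewrite (symE sP i j) subrr.
  move=> [[h1 h2] h3]; split => //; apply/psdE; split.
    apply/matrixP => i j; rewrite mxE; apply/eqP; rewrite -subr_eq0; apply/eqP.
    exact: (h2 (j, i)).
  move=> x; have := h1 x; rewrite /bf.
  by under eq_bigr do under eq_bigr do rewrite mulrAC.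
apply: closedI; first apply: closedI.
- apply: closed_fam; first exact: closed_ge.
  by move=> x; apply: cont_bf.
- apply: closed_fam; first exact: closed_eq.
  by move=> p x; exact: (cvgB (@cont_vm R n p.1 p.2 x) (@cont_vm R n p.2 p.1 x)).
- apply: closed_fam; first exact: closed_eq.
  by move=> i; apply: cont_vm.
Qed.

Lemma primal_exists (R : realType) n (W : 'M[R]_n) :
  exists P, elliptope P /\ forall Q, elliptope Q -> frob P W <= frob Q W.
Proof.
set E := [set v : 'rV[R]_(n * n) | elliptope (vec_mx v)].
have E0 : E !=set0.
  exists (mxvec 1%:M); rewrite /E /= mxvecK; split; last by move=> i; rewrite mxE eqxx.
  apply/psdE; split; first by rewrite trmx1.
  move=> x; rewrite /bf; apply: sumr_ge0 => i _; rewrite (bigD1 i) //= big1 ?addr0.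
    by rewrite mxE eqxx mulr1n mulr1 -expr2 sqr_ge0.
  by move=> j hj; rewrite mxE eq_sym (negbTE hj) mulr0n mulr0 mul0r.
have Ec : compact E.
  apply: (subclosed_compact (@E_closed R n)
    (@rV_compact _ _ (fun=> `[(-1 : R), 1]%classic) (fun=> @segment_compact R (-1) 1))).
  move=> v /= hv k; case: (mxvec_indexP k) => i j.
  have := ell_bound i j hv; rewrite mxE => h.
  by rewrite /= in_itv /=.
have fc : {within E, continuous (fun v : 'rV[R]_(n * n) => frob (vec_mx v) W)}.
  apply: continuous_subspaceT; rewrite /frob.
  under [fun v => _]boolp.funext do under eq_bigr do under eq_bigr do rewrite mulrC.
  exact: cont_bf.
have [c cE cmin] := compact_EVT_min E0 Ec fc.
exists (vec_mx c); split; first by move: cE; rewrite inE.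
move=> Q hQ; have := cmin (mxvec Q); rewrite mxvecK; apply.
by rewrite inE /E /= mxvecK.
Qed.

Theorem theorem6 (R : realType) (n : nat) (W : 'M[R]_n) :
  W^T = W ->
  (forall i j, 0 <= W i j) ->
  (forall i, W i i = 0) ->
  exists Dstar : 'M[R]_n,
    (forall D, dual_opt W D <-> D = Dstar) /\
    (forall P, primal_opt W P <-> (elliptope P /\ P *m (W - Dstar) = 0)).
Proof.
move=> sW _ _; apply: main_assembly => //; exact: primal_exists.
Qed.
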